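(* Let $S$ be a finite $p$-group, $Q\le S$ a characteristic subgroup with $C_S(Q)=Z(Q)$, and $\mathcal{F}$ a saturated fusion system on $S$. Then restriction to $Q$ induces group isomorphisms $\mathrm{Aut}_{\mathcal{F}}(S)/\mathrm{Aut}_{Z(Q)}(S)\cong N_{\mathrm{Aut}_{\mathcal{F}}(Q)}(\mathrm{Aut}_S(Q))$ and $\mathrm{Aut}_{\mathcal{F}}(S)/\mathrm{Aut}_{Q}(S)\cong N_{\mathrm{Out}_{\mathcal{F}}(Q)}(\mathrm{Out}_S(Q))$.
   Context: For subgroups $X\le S$ and $P\le S$ with $X$ normalising $P$, $\mathrm{Aut}_X(P)$ denotes the group of automorphisms of $P$ induced by conjugation by elements of $X$; $\mathrm{Out}_{\mathcal{F}}(Q)=\mathrm{Aut}_{\mathcal{F}}(Q)/\mathrm{Inn}(Q)$ and $\mathrm{Out}_S(Q)$ is the image of $\mathrm{Aut}_S(Q)$ in it. *)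

(* Defs.v *)
From mathcomp Require Import all_boot all_fingroup all_solvable.
Set Implicit Arguments.
Unset Strict Implicit.
Unset Printing Implicit Defensive.
Local Open Scope group_scope.

(* A "morphism" from P in a fusion system is represented by a finite function
   gT -> gT, normalised to be the identity outside its domain P. *)
Notation fmap gT := {ffun gT -> gT}.

Section FusionDefs.
Variable gT : finGroupType.
Implicit Types (P Q R S X : {set gT}) (f h : fmap gT).

Definition injhom P Q : {set fmap gT} :=
  [set f : fmap gT | [&& [forall x, (x \notin P) ==> (f x == x)],
              morphic P f, #|f @: P| == #|P| & f @: P \subset Q]].

Definition cmap P (g : gT) : fmap gT := [ffun x => if x \in P then x ^ g else x].

Definition HomS S P Q : {set fmap gT} := [set cmap P g | g in S & P :^ g \subset Q].

Definition fcomp P f h : fmap gT := [ffun x => if x \in P then h (f x) else x].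

Definition finv P f : fmap gT :=
  [ffun y => if y \in f @: P then odflt y [pick x in P | f x == y] else y].

(* Fusion system F on S : F P Q is the set Hom_F(P, Q). *)
Definition fusion_system S (F : {set gT} -> {set gT} -> {set fmap gT}) : Prop :=
  [/\ forall P Q : {group gT}, P \subset S -> Q \subset S ->
        HomS S P Q \subset F P Q /\ F P Q \subset injhom P Q,
      forall (P Q R : {group gT}) f h, P \subset S -> Q \subset S -> R \subset S ->
        f \in F P Q -> h \in F Q R -> fcomp P f h \in F P R &
      forall (P Q : {group gT}) f, P \subset S -> Q \subset S -> f \in F P Q ->
        f \in F P (f @: P) /\ finv P f \in F (f @: P) P].

Definition Fconj S F P Q : Prop := exists2 f, f \in (F P S : {set fmap gT}) & f @: P = Q.

Definition fully_normalized S F (P : {set gT}) : Prop :=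
  forall Q : {group gT}, Fconj S F P Q -> #|'N_S(Q)| <= #|'N_S(P)|.

Definition fully_centralized S F (P : {set gT}) : Prop :=
  forall Q : {group gT}, Fconj S F P Q -> #|'C_S(Q)| <= #|'C_S(P)|.

Definition AutX (P X : {set gT}) : {set {perm gT}} := conj_aut <<P>> @* X.

Definition AutF (F : {set gT} -> {set gT} -> {set fmap gT}) P : {set {perm gT}} :=
  [set a in Aut P | pval a \in F P P].

Definition Inn P := AutX P P.

(* N_phi = { g in N_S(P) | phi c_g phi^-1 in Aut_S(phi(P)) } *)
Definition Nphi S P f : {set gT} :=
  [set g in 'N_S(P) | [exists h in 'N_S(f @: P), [forall x in P, f (x ^ g) == f x ^ h]]].

Definition saturated (p : nat) S F : Prop :=
  fusion_system S F /\
  (forall P : {group gT}, P \subset S -> fully_normalized S F P ->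
     fully_centralized S F P /\ p.-Sylow(AutF F P) (AutX P S)) /\
  (forall (P : {group gT}) f, P \subset S -> f \in F P S ->
     fully_centralized S F (f @: P) ->
     exists2 g, g \in F (Nphi S P f) S & {in P, g =1 f}).

End FusionDefs.

(* Main.v *)
Require Import Defs.
From mathcomp Require Import all_boot all_fingroup all_solvable.
Set Implicit Arguments.
Unset Strict Implicit.
Unset Printing Implicit Defensive.
Local Open Scope group_scope.

Section Basics.
Variable gT : finGroupType.

Lemma pvalx (s : {perm gT}) x : pval s x = s x.
Proof. by rewrite pvalE. Qed.

Lemma AutXE (P : {group gT}) X : AutX P X = conj_aut P @* X.
Proof. by rewrite /AutX genGidG. Qed.

Lemma conj_aut_Aut (P : {group gT}) g : g \in 'N(P) -> conj_aut P g \in Aut P.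
Proof.
move=> nPg; apply: (subsetP (Aut_conj_aut P 'N(P))).
exact: mem_morphim.
Qed.

Lemma pval_conj_aut (P : {group gT}) g :
  g \in 'N(P) -> pval (conj_aut P g) = cmap P g.
Proof.
move=> nPg; apply/ffunP=> x; rewrite ffunE.
rewrite pvalx.
case: ifP => Px; first exact: norm_conj_autE.
by rewrite (out_Aut (conj_aut_Aut nPg)) ?Px.
Qed.

End Basics.

Section Main.
Variables (gT : finGroupType) (p : nat) (S Q : {group gT})
    (F : {set gT} -> {set gT} -> {set {ffun gT -> gT}}).
Hypotheses (pr_p : prime p) (pS : p.-group S) (chQ : Q \char S)
  (CQ : 'C_S(Q) = 'Z(Q)) (satF : saturated p S F).

Let fsF : fusion_system S F := satF.1.

Lemma cmap_in (P R : {group gT}) g : P \subset S -> R \subset S -> g \in S ->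
  P :^ g \subset R -> cmap P g \in F P R.
Proof.
move=> sPS sRS Sg sPgR; case: fsF => Fhom _ _.
have [h _] := Fhom P R sPS sRS; apply: (subsetP h).
by apply/imsetP; exists g; rewrite // inE Sg.
Qed.

Lemma F_inj (P R : {group gT}) f : P \subset S -> R \subset S -> f \in F P R ->
  f \in injhom P R.
Proof.
move=> sPS sRS fF; case: fsF => Fhom _ _.
have [_ h] := Fhom P R sPS sRS; exact: (subsetP h).
Qed.

Lemma F_comp (P R T : {group gT}) f h : P \subset S -> R \subset S -> T \subset S ->
  f \in F P R -> h \in F R T -> fcomp P f h \in F P T.
Proof. by case: fsF => _ Fc _; apply: Fc. Qed.

Lemma AutF_group_set (P : {group gT}) : P \subset S -> group_set (AutF F P).
Proof.
move=> sPS; apply/group_setP; split.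
  apply/setIdP; split; first exact: group1.
  have -> : pval (1 : {perm gT}) = cmap P 1.
    apply/ffunP=> x; rewrite ffunE.
    rewrite pvalx.
    by rewrite perm1 conjg1; case: ifP.
  by apply: cmap_in; rewrite ?group1 ?conjsg1.
move=> x y /setIdP[Ax Fx] /setIdP[Ay Fy].
apply/setIdP; split; first exact: groupM.
have -> : pval (x * y) = fcomp P (pval x) (pval y).
  apply/ffunP=> z; rewrite ffunE.
  rewrite !pvalx.
  rewrite permM; case: ifP => // Pz.
  by rewrite !(out_Aut _ (negbT Pz)).
exact: F_comp Fx Fy.
Qed.

Let sQS : Q \subset S := char_sub chQ.
Let nQS : S \subset 'N(Q) := char_norm chQ.

Lemma Aut_astabs a : a \in Aut S -> a \in 'N(Q | 'P).
Proof.
move=> Aa; case/andP: chQ => _ /forall_inP h.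
rewrite !inE /=; apply/subsetP=> x Qx; rewrite inE /= apermE.
exact: (subsetP (h a Aa)) _ (imset_f _ Qx).
Qed.

Lemma restr_AutF a : a \in AutF F S -> restr_perm Q a \in AutF F Q.
Proof.
case/setIdP=> Aa Fa; apply/setIdP; split; first exact (Aut_restr_perm sQS Aa).
have nQa := Aut_astabs Aa.
have E: pval (restr_perm Q a) = fcomp Q (cmap Q 1) (pval a).
  apply/ffunP=> x; rewrite /fcomp /cmap !ffunE pvalx; case: ifP=> Qx.
    by rewrite restr_permE // Qx conjg1 pvalx.
  by rewrite (out_perm (restr_perm_on Q a)) ?Qx.
have Fc: fcomp Q (cmap Q 1) (pval a) \in F Q S.
  apply: F_comp (cmap_in _ _ _ _) Fa; rewrite ?group1 ?conjsg1 //.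
have [_ _ Fim0] := fsF; have [Hh1 _] := Fim0 Q S _ sQS (subxx S) Fc.
rewrite -E in Hh1.
have imQ : pval (restr_perm Q a) @: Q = Q.
  by rewrite (eq_imset _ (pvalx (restr_perm Q a))) im_restr_perm.
by rewrite imQ in Hh1.
Qed.

Lemma conj_restr a g : a \in Aut S -> g \in S ->
  conj_aut Q g ^ restr_perm Q a = conj_aut Q (a g).
Proof.
move=> Aa Sg; set r := restr_perm Q a.
have Ar : r \in Aut Q := Aut_restr_perm sQS Aa.
have nQa := Aut_astabs Aa.
have Sag : a g \in S := Aut_closed Aa Sg.
have nQg : g \in 'N(Q) := subsetP nQS g Sg.
have nQag : a g \in 'N(Q) := subsetP nQS _ Sag.
apply: (eq_Aut (A := Q)).
- by rewrite groupJ // conj_aut_Aut.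
- exact: conj_aut_Aut nQag.
move=> x Qx; rewrite conjgE !permM.
have Qy : r^-1 x \in Q by apply: Aut_closed Qx; rewrite groupV.
rewrite (norm_conj_autE nQag Qx) (norm_conj_autE nQg Qy).
rewrite restr_permE //; last by rewrite memJ_norm.
rewrite -(autmE Aa) morphJ //; last exact: subsetP sQS _ Qy.
change (a (r^-1 x) ^ a g = x ^ a g).
by rewrite -(restr_permE nQa Qy) permKV.
Qed.

Lemma restr_norm a : a \in AutF F S -> restr_perm Q a \in 'N(AutX Q S).
Proof.
case/setIdP=> Aa _; rewrite AutXE inE; apply/subsetP=> _ /imsetP[c Hc ->].
case/morphimP: Hc => g nQg Sg ->; have Sag := Aut_closed Aa Sg.
by rewrite conj_restr // mem_morphim // (subsetP nQS).
Qed.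


Lemma fnQ : fully_normalized S F Q.
Proof.
move=> R _; rewrite (setIidPl nQS); exact: subset_leq_card (subsetIl _ _).
Qed.

Lemma AutF_FQS b : b \in AutF F Q -> pval b \in F Q S.
Proof.
case/setIdP=> Ab Fb.
have -> : pval b = fcomp Q (pval b) (cmap Q 1).
  apply/ffunP=> x; rewrite /fcomp /cmap !ffunE !pvalx; case: ifP => Qx.
    by rewrite (Aut_closed Ab Qx) conjg1.
  by rewrite (out_Aut Ab) ?Qx.
apply: (F_comp sQS sQS (subxx S) Fb); apply: cmap_in; rewrite ?group1 ?conjsg1 //.
Qed.

Lemma extend b : b \in AutF F Q -> b \in 'N(AutX Q S) ->
  exists2 a, a \in AutF F S & restr_perm Q a = b.
Proof.
move=> AFb nb; have := AFb; case/setIdP => Ab _.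
have FbS := AutF_FQS AFb.
have := Ab; rewrite inE => /andP[pb _].
have imQ : pval b @: Q = Q by rewrite (eq_imset _ (pvalx b)) im_perm_on.
have fcQ : fully_centralized S F (pval b @: Q).
  by rewrite imQ; exact: (satF.2.1 Q sQS fnQ).1.
have [g Fg eqg] := satF.2.2 Q (pval b) sQS FbS fcQ.
have NS : Nphi S Q (pval b) = S.
  apply/eqP; rewrite eqEsubset; apply/andP; split.
    by apply/subsetP=> x; rewrite inE => /andP[/setIP[]].
  apply/subsetP=> x Sx; rewrite inE imQ (setIidPl nQS) Sx /=.
  have nQx := subsetP nQS x Sx.
  have cx : conj_aut Q x \in AutX Q S by rewrite AutXE mem_morphim.
  have : conj_aut Q x ^ b \in AutX Q S by rewrite memJ_norm.
  rewrite AutXE => /morphimP[h nQh Sh Eh].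
  apply/exists_inP; exists h => //; apply/forall_inP=> y Qy; apply/eqP.
  have := congr1 (fun c : {perm gT} => c (b y)) Eh; rewrite /= conjgE !permM permK.
  have Qby := Aut_closed Ab Qy.
  by rewrite !pvalx norm_conj_autE // norm_conj_autE.
rewrite NS in Fg.
have Ig := F_inj (subxx S) (subxx S) Fg.
rewrite inE in Ig; case/and4P: Ig => /forallP fixg mg /eqP cg subg.
have injg : {in S &, injective g} by apply/imset_injP/eqP.
set a := perm_in injg subg.
have Aa : a \in Aut S.
  rewrite inE perm_in_on /=; apply/morphicP=> x y Sx Sy.
  by rewrite !perm_inE ?groupM //; exact: (morphicP mg).
have pa : pval a = g.
  apply/ffunP=> x; rewrite pvalx; case Sx: (x \in S); first by rewrite perm_inE.
  rewrite (out_perm (perm_in_on _ _)) ?Sx //; apply/esym/eqP.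
  exact: (implyP (fixg x)) (negbT Sx).
exists a; first by apply/setIdP; split => //; rewrite pa.
apply: (eq_Aut (A:=Q)); first exact (Aut_restr_perm sQS Aa); first exact Ab.
move=> x Qx; by rewrite restr_permE ?Aut_astabs // -pvalx pa eqg // pvalx.
Qed.

Definition AutFgrp (P : {group gT}) (sPS : P \subset S) :=
  Group (AutF_group_set sPS).

Local Notation AFS := (AutFgrp (subxx S)).

Lemma AutF_astabs : AutF F S \subset 'N(Q | 'P).
Proof. by apply/subsetP=> a /setIdP[Aa _]; apply: Aut_astabs. Qed.

Lemma restr_im : restr_perm Q @* AutF F S = 'N_(AutF F Q)(AutX Q S).
Proof.
apply/eqP; rewrite eqEsubset; apply/andP; split.
  by apply/subsetP=> _ /morphimP[a _ Aa ->]; rewrite inE restr_AutF // restr_norm.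
apply/subsetP=> b /setIP[AFb nb]; have [a Aa <-] := extend AFb nb.
by apply: mem_morphim => //; apply: (subsetP AutF_astabs).
Qed.

Lemma coprime_fix a : a \in Aut S -> {in Q, forall x, a x = x} ->
  p^'.-elt a -> a = 1.
Proof.
move=> Aa fixa pa; apply/permP => s; rewrite perm1.
case Ss: (s \in S); last by rewrite (out_Aut Aa) ?Ss.
set z := s^-1 * a s.
have Sas := Aut_closed Aa Ss.
have Sz : z \in S by rewrite groupM ?groupV.
have cz : z \in 'C_S(Q).
  rewrite inE Sz; apply/centP => y Qy; rewrite /commute.
  suff yz : y ^ z = y by rewrite [RHS]conjgC yz.
  have Qy' : y ^ s^-1 \in Q by rewrite memJ_norm // (subsetP nQS) ?groupV.
  have Qy'' : (y ^ s^-1) ^ s \in Q by rewrite memJ_norm // (subsetP nQS).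
  have e := fixa _ Qy''.
  have Sy' := subsetP sQS _ Qy'.
  rewrite -(autmE Aa) morphJ // in e.
  change (a (y ^ s^-1) ^ a s = (y ^ s^-1) ^ s) in e.
  rewrite (fixa _ Qy') conjgKV in e.
  by rewrite conjgM.
rewrite CQ in cz; have Qz : z \in Q := subsetP (center_sub Q) _ cz.
have as_ : a s = s * z by rewrite mulKVg.
have iter n : (a ^+ n) s = s * z ^+ n.
  elim: n => [|n IH]; first by rewrite expg0 perm1 expg0 mulg1.
  have Szn : z ^+ n \in S by rewrite groupX.
  rewrite expgSr permM IH -(autmE Aa) morphM //.
  change (a s * a (z ^+ n) = s * z ^+ n.+1).
  by rewrite (fixa (z ^+ n)) ?groupX // as_ expgS -mulgA.
have e := iter #[a]; rewrite expg_order perm1 in e.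
have ez : z ^+ #[a] = 1 by apply: (mulgI s); rewrite mulg1 -e.
have dz : #[z] %| #[a] by rewrite order_dvdn ez.
have pz : p.-elt z := mem_p_elt pS Sz.
have p'z : p^'.-elt z := pnat_dvd dz pa.
have z1 : z = 1 by apply/eqP; rewrite -order_eq1; apply/eqP; exact: pnat_1 pz p'z.
by rewrite as_ z1 mulg1.
Qed.

Lemma conj_AutF g : g \in S -> conj_aut S g \in AutF F S.
Proof.
move=> Sg; have nSg := subsetP (normG S) g Sg.
apply/setIdP; split; first exact: conj_aut_Aut.
rewrite pval_conj_aut //; apply: cmap_in; rewrite ?conjGid //.
Qed.

Lemma restr_conj_aut g : g \in S -> restr_perm Q (conj_aut S g) = conj_aut Q g.
Proof.
move=> Sg; have nSg := subsetP (normG S) g Sg; have nQg := subsetP nQS g Sg.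
have AS := conj_aut_Aut nSg.
apply: (eq_Aut (A:=Q)); first exact (Aut_restr_perm sQS AS).
  exact: conj_aut_Aut.
move=> x Qx; rewrite restr_permE ?Aut_astabs //.
by rewrite !norm_conj_autE // (subsetP sQS).
Qed.

Lemma fnS : fully_normalized S F S.
Proof.
move=> R _; rewrite (setIidPl (normG S)); exact: subset_leq_card (subsetIl _ _).
Qed.

Lemma ker_pgroup : p.-group ('ker_AFS (restr_perm Q)).
Proof.
apply/pgroupP=> r pr_r rK; have [x Kx ox] := Cauchy pr_r rK.
apply/idPn => rp.
have p'x : p^'.-elt x by rewrite /p_elt ox pnatE // !inE.
have [AFx kx] := setIP Kx.
have Ax : x \in Aut S := (setIdP AFx).1.
have x1 : x = 1.
  apply: coprime_fix Ax _ p'x => y Qy.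
  by rewrite -(restr_permE (dom_ker kx) Qy) (mker kx) perm1.
by move: pr_r; rewrite -ox x1 order1.
Qed.

Lemma ker_restr : 'ker_(AutF F S) (restr_perm Q) = AutX S 'Z(Q).
Proof.
rewrite AutXE; apply/eqP; rewrite eqEsubset; apply/andP; split; last first.
  apply/subsetP=> _ /morphimP[z nSz Zz ->].
  have Qz := subsetP (center_sub Q) _ Zz; have Sz := subsetP sQS _ Qz.
  rewrite inE conj_AutF //=; apply/kerP; first exact: (subsetP AutF_astabs) (conj_AutF Sz).
  rewrite /= restr_conj_aut //; apply: mker; rewrite ker_conj_aut.
  exact: (subsetP (subsetIr Q 'C(Q))).
have sAD : AFS \subset 'N(Q | 'P) := AutF_astabs.
have nK : 'ker_AFS (restr_perm Q) <| AFS by rewrite -(ker_restrm sAD) ker_normal.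
have syl := (satF.2.1 S (subxx S) fnS).2; rewrite AutXE in syl.
have sKI := normal_sub_max_pgroup (@Hall_max _ _ [group of conj_aut S @* S] AFS syl) ker_pgroup nK.
apply/subsetP=> a Ka; have := subsetP sKI a Ka.
case/morphimP => g nSg Sg ea; apply/morphimP; exists g => //.
rewrite -CQ inE Sg; apply/centP=> y Qy; rewrite /commute.
suff yg : y ^ g = y by rewrite [RHS]conjgC yg.
have [_ kx] := setIP Ka.
rewrite -(norm_conj_autE (G:=S) nSg (subsetP sQS _ Qy)) -ea -(restr_permE (dom_ker kx) Qy).
by rewrite (mker kx) perm1.
Qed.

Lemma inn_pre : [set a in AutF F S | restr_perm Q a \in Inn Q] = AutX S Q.
Proof.
rewrite /Inn !AutXE; apply/eqP; rewrite eqEsubset; apply/andP; split; last first.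
  apply/subsetP=> _ /morphimP[q nSq Qq ->]; have Sq := subsetP sQS q Qq.
  rewrite inE conj_AutF //= restr_conj_aut // mem_morphim //.
  exact: (subsetP (normG Q)).
apply/subsetP=> a /setIdP[AFa /morphimP[q nQq Qq ea]].
have Sq := subsetP sQS q Qq; have nSq := subsetP (normG S) q Sq.
have AFc := conj_AutF Sq.
have Da := subsetP AutF_astabs a AFa; have Dc := subsetP AutF_astabs _ AFc.
have b : a * (conj_aut S q)^-1 \in 'ker_AFS (restr_perm Q).
  have AFc' : conj_aut S q \in AFS := AFc.
  have AFa' : a \in AFS := AFa.
  rewrite inE groupM ?groupV //=; apply/kerP; first by rewrite groupM ?groupV.
  by rewrite morphM ?groupV // morphV //= restr_conj_aut // ea mulgV.
rewrite ker_restr AutXE in b; case/morphimP: b => z nSz Zz ez.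
have Qz := subsetP (center_sub Q) _ Zz.
have -> : a = conj_aut S z * conj_aut S q by rewrite -ez mulgKV.
by rewrite -morphM // mem_morphim ?groupM.
Qed.

Lemma conj_autJ (P : {group gT}) b q : b \in Aut P -> q \in P ->
  conj_aut P q ^ b = conj_aut P (b q).
Proof.
move=> Ab Pq; have nPq := subsetP (normG P) q Pq.
have Pbq := Aut_closed Ab Pq; have nPbq := subsetP (normG P) _ Pbq.
apply: (eq_Aut (A := P)).
- by rewrite groupJ // conj_aut_Aut.
- exact: conj_aut_Aut nPbq.
move=> x Px; rewrite conjgE !permM.
have Py : b^-1 x \in P by apply: Aut_closed Px; rewrite groupV.
rewrite (norm_conj_autE nPbq Px) (norm_conj_autE nPq Py).
rewrite -(autmE Ab) morphJ //.
change (b (b^-1 x) ^ b q = x ^ b q).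
by rewrite permKV.
Qed.

Lemma Aut_norm_Inn (P : {group gT}) : Aut P \subset 'N(conj_aut P @* P).
Proof.
apply/subsetP=> b Ab; rewrite inE; apply/subsetP=> _ /imsetP[c /morphimP[q _ Qq ->] ->].
have Pbq := Aut_closed Ab Qq.
by rewrite conj_autJ // mem_morphim // (subsetP (normG P)).
Qed.

Lemma part2b : (restr_perm Q @* AutF F S) / Inn Q
        = 'N_(AutF F Q / Inn Q)(AutX Q S / Inn Q).
Proof.
rewrite restr_im /Inn !AutXE; apply: quotient_subnormG.
apply: morphim_normal; exact: char_normal chQ.
Qed.

Lemma part1c : (AutF F S / AutX S 'Z(Q)) \isog 'N_(AutF F Q)(AutX Q S).
Proof.
have := @first_isog_loc _ _ _ AFS (restr_perm_morphism Q) AutF_astabs.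
by rewrite /= ker_restr restr_im.
Qed.

Lemma part2c :
  (AutF F S / AutX S Q) \isog 'N_(AutF F Q / Inn Q)(AutX Q S / Inn Q).
Proof.
have e := part2b; rewrite /Inn (AutXE Q Q) in e; rewrite /Inn (AutXE Q Q) -e.
set Ig := [group of conj_aut Q @* Q].
have sAD : AFS \subset restr_perm_morphism Q @*^-1 'N(Ig).
  apply/subsetP => a AFa; rewrite inE (subsetP AutF_astabs) //=.
  rewrite inE; exact: subsetP (Aut_norm_Inn Q) _ ((setIdP (restr_AutF AFa)).1).
have := @first_isog_loc _ _ _ AFS
  (comp_morphism (restr_perm_morphism Q) (coset_morphism Ig)) sAD.
rewrite morphim_comp /= (ker_comp (restr_perm_morphism Q) (coset_morphism Ig)) ker_coset.
suff -> : AutF F S :&: restr_perm_morphism Q @*^-1 Ig = AutX S Q by [].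
rewrite -inn_pre /Inn (AutXE Q Q); apply/setP=> a; rewrite in_setI [in RHS]in_set.
case AFa: (a \in AutF F S) => //=.
by rewrite morphpreE in_setI (subsetP AutF_astabs _ AFa) /= inE.
Qed.

End Main.

Theorem lemma2p2 (gT : finGroupType) (p : nat) (S Q : {group gT})
    (F : {set gT} -> {set gT} -> {set {ffun gT -> gT}}) :
  prime p -> p.-group S -> Q \char S -> 'C_S(Q) = 'Z(Q) -> saturated p S F ->
  [/\ 'ker_(AutF F S) (restr_perm Q) = AutX S 'Z(Q),
      restr_perm Q @* AutF F S = 'N_(AutF F Q)(AutX Q S)
    & (AutF F S / AutX S 'Z(Q)) \isog 'N_(AutF F Q)(AutX Q S)] /\
  [/\ [set a in AutF F S | restr_perm Q a \in Inn Q] = AutX S Q,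
      (restr_perm Q @* AutF F S) / Inn Q
        = 'N_(AutF F Q / Inn Q)(AutX Q S / Inn Q)
    & (AutF F S / AutX S Q) \isog 'N_(AutF F Q / Inn Q)(AutX Q S / Inn Q)].
Proof.
move=> pr_p pS chQ CQ satF.
split; split.
- exact: (ker_restr pS chQ CQ satF).
- exact: (restr_im chQ satF).
- exact: (part1c pS chQ CQ satF).
- exact: (inn_pre pS chQ CQ satF).
- exact: (part2b chQ satF).
- exact: (part2c pS chQ CQ satF).
Qed.
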